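(* Let $p\ge1$. Let $U$, $V$ be discrete random variables taking values in a common finite set $\mathcal{U}$, and $W$ a discrete random variable taking values in a finite set $\mathcal{W}$, all on a common probability space, such that $\|u-u'\|_p=\sqrt[p]{2}$ for distinct $u,u'\in\mathcal{U}$ and $\|w-w'\|_p=\sqrt[p]{2}$ for distinct $w,w'\in\mathcal{W}$ (and $0$ for equal points). Equip pairs with the ground metric $\|(u,w)-(u',w')\|_p=\left(\|u-u'\|_p^p+\|w-w'\|_p^p\right)^{1/p}$. Then, with $W_1$ the 1-Wasserstein distance, $$W_1(p(U,W),p(U)p(W))=\sum_{w}W_1(p(U\mid W=w),p(U))\,\mathbb{P}(W=w),$$ $$W_1(p(U,W),p(V,W))=\sum_{w}W_1(p(U\mid W=w),p(V\mid W=w))\,\mathbb{P}(W=w),$$ $$W_1(p(U)p(W),p(V)p(W))=\sum_{w}W_1(p(U),p(V))\,\mathbb{P}(W=w).$$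
   Context: $p(U,W)$ denotes the joint law, $p(U)p(W)$ the product of marginal laws, and $p(U\mid W=w)$ the conditional law. *)

(* Defs.v *)
From HB Require Import structures.
From mathcomp Require Import all_boot all_order all_algebra.
From mathcomp Require Import all_classical all_reals all_analysis.
Set Implicit Arguments. Unset Strict Implicit. Unset Printing Implicit Defensive.
Import Order.TTheory GRing.Theory Num.Theory.
Local Open Scope classical_set_scope.
Local Open Scope ring_scope.

Definition pnorm (R : realType) (p : R) (n : nat) (x : 'rV[R]_n) : R :=
  (\sum_(i < n) `|x ord0 i| `^ p) `^ p^-1.

Definition coupling (R : realType) (X Y : finType) (mu : X -> R) (nu : Y -> R)
  (pi : X * Y -> R) : Prop :=
  [/\ forall z, 0 <= pi z,
      forall x, \sum_(y : Y) pi (x, y) = mu x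
    & forall y, \sum_(x : X) pi (x, y) = nu y].

Definition W1 (R : realType) (X : finType) (c : X -> X -> R) (mu nu : X -> R) : R :=
  inf [set (\sum_(z : X * X) pi z * c z.1 z.2) | pi in [set pi | coupling mu nu pi]].

Definition pair_cost (R : realType) (p : R) (A B : finType)
  (cA : A -> A -> R) (cB : B -> B -> R) (x y : A * B) : R :=
  (cA x.1 y.1 `^ p + cB x.2 y.2 `^ p) `^ p^-1.

Section Laws.
Context (R : realType) (d : measure_display) (T : measurableType d)
  (P : probability T R).

Definition law (A : finType) (X : T -> A) (a : A) : R :=
  fine (P (X @^-1` [set a])).

Definition jlaw (A B : finType) (X : T -> A) (Y : T -> B) (z : A * B) : R :=
  fine (P (X @^-1` [set z.1] `&` Y @^-1` [set z.2])).

Definition plaw (A B : finType) (X : T -> A) (Y : T -> B) (z : A * B) : R :=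
  law X z.1 * law Y z.2.

Definition claw (A B : finType) (X : T -> A) (Y : T -> B) (b : B) (a : A) : R :=
  jlaw X Y (a, b) / law Y b.
End Laws.

(* Main.v *)
Require Import Defs.
From HB Require Import structures.
From mathcomp Require Import all_boot all_order all_algebra.
From mathcomp Require Import all_classical all_reals all_analysis.
From mathcomp Require Import lra.
Import Order.TTheory GRing.Theory Num.Theory.
Local Open Scope classical_set_scope.
Local Open Scope ring_scope.


Lemma sum_pair (R : realType) (A A' : finType) (F : A * A' -> R) :
  \sum_z F z = \sum_x \sum_y F (x, y).
Proof. by rewrite pair_bigA; apply: eq_bigr => -[]. Qed.

Section Gen.
Variables (R : realType) (X B : finType) (g : X -> B) (c : X -> X -> R) (k : R)
  (mu nu : X -> R).
Hypotheses (hk : 0 <= k) (c0 : forall x, c x x = 0)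
  (cge : forall x y, x != y -> k <= c x y)
  (ceq : forall x y, x != y -> g x = g y -> c x y = k)
  (mu0 : forall x, 0 <= mu x) (nu0 : forall x, 0 <= nu x)
  (blk : forall b, \sum_(x | g x == b) mu x = \sum_(x | g x == b) nu x).

Let m x := if mu x <= nu x then mu x else nu x.

Let m_le_mu x : m x <= mu x.
Proof. by rewrite /m; case: (leP (mu x) (nu x)) => h //; exact: ltW. Qed.
Let m_le_nu x : m x <= nu x.
Proof. by rewrite /m; case: (leP (mu x) (nu x)). Qed.
Let m_ge0 x : 0 <= m x. Proof. by rewrite /m; case: (leP (mu x) (nu x)). Qed.
Let m_glb x z : z <= mu x -> z <= nu x -> z <= m x.
Proof. by rewrite /m; case: (leP (mu x) (nu x)). Qed.
Let mm0 x : (mu x - m x) * (nu x - m x) = 0.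
Proof. by rewrite /m; case: (leP (mu x) (nu x)) => _; rewrite subrr ?mul0r ?mulr0. Qed.

Lemma W1_lower pi : coupling mu nu pi ->
  k * (\sum_x (mu x - m x)) <= \sum_(z : X * X) pi z * c z.1 z.2.
Proof.
case=> pi0 pimu pinu.
rewrite sum_pair /=.
rewrite mulr_sumr; apply: ler_sum => x _.
rewrite (bigD1 x) //= c0 mulr0 add0r.
have hmu : mu x = pi (x, x) + \sum_(y | y != x) pi (x, y).
  by rewrite -pimu (bigD1 x).
have hpm : pi (x, x) <= m x.
  apply: m_glb.
    by rewrite -pimu (bigD1 x) //= lerDl sumr_ge0.
  by rewrite -pinu (bigD1 x) //= lerDl sumr_ge0.
apply: (@le_trans _ _ (k * \sum_(y | y != x) pi (x, y))).
  by rewrite ler_wpM2l // hmu; move: hpm; lra.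
rewrite mulr_sumr; apply: ler_sum => y yx.
by rewrite mulrC ler_wpM2l // cge // eq_sym.
Qed.

Let D b := \sum_(x | g x == b) (mu x - m x).

Let D_ge0 b : 0 <= D b.
Proof. by apply: sumr_ge0 => x _; rewrite subr_ge0. Qed.

Let D'E b : \sum_(y | g y == b) (nu y - m y) = D b.
Proof. by rewrite /D !sumrB blk. Qed.

Let D0 b : D b = 0 -> forall x, g x == b -> mu x - m x = 0.
Proof. by move=> h; apply: psumr_eq0P h => x _; rewrite subr_ge0. Qed.

Let D0' b : D b = 0 -> forall y, g y == b -> nu y - m y = 0.
Proof. by move=> h; rewrite -D'E in h; apply: psumr_eq0P h => y _; rewrite subr_ge0. Qed.

Let pi0 (z : X * X) : R :=
  (z.2 == z.1)%:R * m z.1 +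
  (g z.2 == g z.1)%:R * ((mu z.1 - m z.1) * (nu z.2 - m z.2) / D (g z.1)).

Let sum_ind (A : finType) (P : pred A) (F : A -> R) :
  \sum_y (P y)%:R * F y = \sum_(y | P y) F y.
Proof. by rewrite [RHS]big_mkcond /=; apply: eq_bigr => y _; rewrite mulr_natl mulrb. Qed.

Let rowpart x :
  \sum_y (g y == g x)%:R * ((mu x - m x) * (nu y - m y) / D (g x)) = mu x - m x.
Proof.
rewrite (@sum_ind _ (fun y => g y == g x)).
under eq_bigr => y _ do rewrite mulrAC -mulrA.
rewrite -mulr_sumr -mulr_sumr D'E mulrA.
have [DE|Dn] := eqVneq (D (g x)) 0.
  by rewrite DE (D0 _ DE) ?eqxx // mulr0.
by rewrite divfK.
Qed.

Let colpart y :
  \sum_x (g y == g x)%:R * ((mu x - m x) * (nu y - m y) / D (g x)) = nu y - m y.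
Proof.
rewrite (@sum_ind _ (fun x => g y == g x)).
under eq_bigr => x /eqP <- do [].
rewrite -!mulr_suml.
under eq_bigl => x do rewrite eq_sym.
rewrite -/(D (g y)).
have [DE|Dn] := eqVneq (D (g y)) 0.
  by rewrite DE !mul0r (D0' _ DE).
by rewrite mulrAC divff ?mul1r.
Qed.

Let pi0_coupling : coupling mu nu pi0.
Proof.
split.
- move=> z; rewrite /pi0; apply: addr_ge0; apply: mulr_ge0 => //.
  by apply: divr_ge0 => //; apply: mulr_ge0; rewrite subr_ge0.
- move=> x; rewrite /pi0 /= big_split /= rowpart.
  rewrite (@sum_ind _ (fun y => y == x) (fun _ => m x)) big_pred1_eq.
  by rewrite addrC subrK.
- move=> y; rewrite /pi0 /= big_split /= colpart.
  rewrite (@sum_ind _ (fun x => y == x) m).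
  under eq_bigl => x do rewrite eq_sym.
  by rewrite big_pred1_eq addrC subrK.
Qed.

Let pi0_cost : \sum_(z : X * X) pi0 z * c z.1 z.2 = k * \sum_x (mu x - m x).
Proof.
rewrite sum_pair mulr_sumr; apply: eq_bigr => x _ /=.
have E : forall y, pi0 (x, y) * c x y =
  (g y == g x)%:R * ((mu x - m x) * (nu y - m y) / D (g x)) * k.
  move=> y; rewrite /pi0 /=.
  have [->|yx] := eqVneq y x.
    by rewrite c0 mm0 !(mul0r, mulr0).
  rewrite mul0r add0r.
  have [gE|gn] := eqVneq (g y) (g x).
    by rewrite ceq // ?gE // eq_sym.
  by rewrite !mul0r.
under eq_bigr => y _ do rewrite E.
by rewrite -mulr_suml rowpart mulrC.
Qed.

Lemma W1_block_aux : W1 c mu nu = k * \sum_x (mu x - m x).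
Proof.
rewrite /W1.
set S := [set _ | _ in _].
have S0 : S (k * \sum_x (mu x - m x)).
  by exists pi0; [exact: pi0_coupling | exact: pi0_cost].
have lb : lbound S (k * \sum_x (mu x - m x)).
  by move=> _ [pi cp <-]; exact: W1_lower.
apply/eqP; rewrite eq_le; apply/andP; split.
  by apply: ge_inf => //; exists (k * \sum_x (mu x - m x)).
by apply: lb_le_inf => //; exists (k * \sum_x (mu x - m x)).
Qed.

End Gen.

Definition tvsum (R : realType) (X : finType) (mu nu : X -> R) :=
  \sum_x (mu x - (if mu x <= nu x then mu x else nu x)).
Arguments tvsum {R X}.

Lemma W1_block (R : realType) (X B : finType) (g : X -> B) (c : X -> X -> R) (k : R)
  (mu nu : X -> R) :
  0 <= k -> (forall x, c x x = 0) ->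
  (forall x y, x != y -> k <= c x y) ->
  (forall x y, x != y -> g x = g y -> c x y = k) ->
  (forall x, 0 <= mu x) -> (forall x, 0 <= nu x) ->
  (forall b, \sum_(x | g x == b) mu x = \sum_(x | g x == b) nu x) ->
  W1 c mu nu = k * tvsum mu nu.
Proof. move=> hk c0 cge ceq mu0 nu0 blk; exact: (@W1_block_aux R X B g c k mu nu hk c0 cge ceq mu0 nu0 blk). Qed.


Section Prob.
Context (R : realType) (d : measure_display) (T : measurableType d)
  (P : probability T R).

Let fP (S : set T) := fine (P S).

Lemma fP_ge0 S : 0 <= fine (P S).
Proof. exact/fine_ge0/measure_ge0. Qed.

Lemma fP_additive (B : finType) (Y : T -> B) (A : set T) :
  measurable A -> (forall b, measurable (Y @^-1` [set b])) ->
  \sum_b fine (P (A `&` Y @^-1` [set b])) = fine (P A).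
Proof.
move=> mA mY.
have H : forall s : seq B, uniq s ->
    fine (P (A `&` Y @^-1` [set b | b \in s])) =
    \sum_(b <- s) fine (P (A `&` Y @^-1` [set b])).
  elim=> [|b s IH] /=.
    move=> _; rewrite big_nil.
    rewrite (_ : _ `&` _ = set0) ?measure0 //.
    by apply/seteqP; split => t //= [_]; rewrite in_nil.
  move=> /andP[bs us]; rewrite big_cons -IH //.
  have mb : measurable (A `&` Y @^-1` [set b]) by exact: measurableI.
  have ms : measurable (A `&` Y @^-1` [set b | b \in s]).
    apply: measurableI => //.
    rewrite (_ : Y @^-1` _ = \bigcup_(c in [set c | c \in s]) Y @^-1` [set c]).
      by apply: fin_bigcup_measurable => //; exact: finite_finset.
    by apply/seteqP; split => t /=; [move=> ts; exists (Y t) | case=> c /= cs ->].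
  rewrite (_ : _ `&` _ = (A `&` Y @^-1` [set b]) `|` (A `&` Y @^-1` [set b | b \in s])).
    rewrite measureU //; last first.
      apply/seteqP; split => t //= [[_ ->]] [_]; by rewrite (negbTE bs).
    by rewrite fineD // fin_num_measure.
  apply/seteqP; split => t /=.
    by move=> [At]; rewrite in_cons => /orP[/eqP->|ts]; [left|right].
  by case=> -[At Yt]; split => //; rewrite in_cons ?Yt ?eqxx ?Yt ?orbT.
have := H (enum B) (enum_uniq _).
rewrite big_enum /= => <-.
congr (fine (P _)); apply/seteqP; split => t //=; first by case.
by move=> At; split => //; rewrite mem_enum.
Qed.

Lemma law_ge0 (A : finType) (X : T -> A) a : 0 <= law P X a.
Proof. exact: fP_ge0. Qed.

Lemma jlaw_ge0 (A B : finType) (X : T -> A) (Y : T -> B) z : 0 <= jlaw P X Y z.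
Proof. exact: fP_ge0. Qed.

Lemma jlaw_sum2 (A B : finType) (X : T -> A) (Y : T -> B) a :
  (forall a, measurable (X @^-1` [set a])) -> (forall b, measurable (Y @^-1` [set b])) ->
  \sum_b jlaw P X Y (a, b) = law P X a.
Proof. by move=> mX mY; rewrite /law -(fP_additive _ Y (X @^-1` [set a]) (mX a) mY). Qed.

Lemma jlaw_sum1 (A B : finType) (X : T -> A) (Y : T -> B) b :
  (forall a, measurable (X @^-1` [set a])) -> (forall b, measurable (Y @^-1` [set b])) ->
  \sum_a jlaw P X Y (a, b) = law P Y b.
Proof.
move=> mX mY; rewrite /law -(fP_additive _ X (Y @^-1` [set b]) (mY b) mX).
by apply: eq_bigr => a _; rewrite /jlaw setIC.
Qed.

Lemma law_sum (A : finType) (X : T -> A) :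
  (forall a, measurable (X @^-1` [set a])) -> \sum_a law P X a = 1.
Proof.
move=> mX; rewrite /law.
under eq_bigr => a _ do rewrite -[X @^-1` _]setTI.
by rewrite fP_additive // probability_setT.
Qed.

Lemma jlaw_le (A B : finType) (X : T -> A) (Y : T -> B) a b :
  (forall a, measurable (X @^-1` [set a])) -> (forall b, measurable (Y @^-1` [set b])) ->
  jlaw P X Y (a, b) <= law P Y b.
Proof.
move=> mX mY; rewrite -(jlaw_sum1 _ _ X Y b mX mY) (bigD1 a) //= lerDl.
by apply: sumr_ge0 => *; exact: jlaw_ge0.
Qed.

Lemma clawK (A B : finType) (X : T -> A) (Y : T -> B) a b :
  (forall a, measurable (X @^-1` [set a])) -> (forall b, measurable (Y @^-1` [set b])) ->
  jlaw P X Y (a, b) = claw P X Y b a * law P Y b.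
Proof.
move=> mX mY; rewrite /claw.
have [q0|qn] := eqVneq (law P Y b) 0; last by rewrite divfK.
rewrite q0 mulr0; apply/eqP; rewrite eq_le jlaw_ge0 andbT -q0.
exact: jlaw_le.
Qed.

Lemma claw_ge0 (A B : finType) (X : T -> A) (Y : T -> B) b a : 0 <= claw P X Y b a.
Proof. by apply: divr_ge0; [exact: jlaw_ge0 | exact: law_ge0]. Qed.

Lemma claw_sum (A B : finType) (X : T -> A) (Y : T -> B) b :
  (forall a, measurable (X @^-1` [set a])) -> (forall b, measurable (Y @^-1` [set b])) ->
  law P Y b != 0 -> \sum_a claw P X Y b a = 1.
Proof.
by move=> mX mY qn; rewrite /claw -mulr_suml jlaw_sum1 // divff.
Qed.

End Prob.


Lemma pnorm0 (R : realType) (p : R) n (x : 'rV[R]_n) : p != 0 -> pnorm p (x - x) = 0.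
Proof.
move=> p0; rewrite /pnorm big1 ?powR0 ?invr_eq0 // => i _.
by rewrite !mxE subrr normr0 powR0.
Qed.

Lemma W1_disc (R : realType) (X : finType) (c : X -> X -> R) (k : R) (mu nu : X -> R) :
  0 <= k -> (forall x, c x x = 0) -> (forall x y, x != y -> c x y = k) ->
  (forall x, 0 <= mu x) -> (forall x, 0 <= nu x) ->
  \sum_x mu x = \sum_x nu x ->
  W1 c mu nu = k * tvsum mu nu.
Proof.
move=> k0 c0 ck mu0 nu0 hs.
apply: (@W1_block R X unit (fun _ => tt)) => //.
- by move=> x y /ck ->.
- by move=> x y /ck ->.
Qed.

Lemma W1_term (R : realType) (X : finType) (c : X -> X -> R) (k q : R)
  (muw nuw mu nu : X -> R) :
  0 <= k -> (forall x, c x x = 0) -> (forall x y, x != y -> c x y = k) ->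
  0 <= q -> (forall x, 0 <= muw x) -> (forall x, 0 <= nuw x) ->
  (q != 0 -> \sum_x muw x = \sum_x nuw x) ->
  (forall x, mu x = muw x * q) -> (forall x, nu x = nuw x * q) ->
  W1 c muw nuw * q = k * tvsum mu nu.
Proof.
move=> k0 c0 ck q0 mu0 nu0 hs hmu hnu.
have [qe|qn] := eqVneq q 0.
  rewrite qe mulr0 /tvsum big1 ?mulr0 // => x _.
  by rewrite hmu hnu qe !mulr0 lexx subrr.
have qp : 0 < q by rewrite lt_neqAle eq_sym qn q0.
rewrite (W1_disc _ _ _ _ _ _ k0 c0 ck mu0 nu0 (hs qn)) -mulrA; congr (_ * _).
rewrite /tvsum mulr_suml; apply: eq_bigr => x _.
rewrite hmu hnu ler_pM2r //; case: ifP => _; by rewrite mulrBl.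
Qed.

Lemma sum_snd (R : realType) (A B : finType) (F : A * B -> R) b :
  \sum_(x | x.2 == b) F x = \sum_a F (a, b).
Proof.
rewrite big_mkcond sum_pair; apply: eq_bigr => a _.
by rewrite -big_mkcond /= big_pred1_eq.
Qed.

Lemma tvsum_pair (R : realType) (A B : finType) (mu nu : A * B -> R) :
  tvsum mu nu = \sum_b tvsum (fun a => mu (a, b)) (fun a => nu (a, b)).
Proof. by rewrite /tvsum sum_pair exchange_big. Qed.

Theorem lemma7 (R : realType) (d : measure_display) (T : measurableType d)
  (P : probability T R) (p : R) (n m : nat)
  (SU SW : finType) (eU : SU -> 'rV[R]_n) (eW : SW -> 'rV[R]_m)
  (U V : T -> SU) (W : T -> SW) :
  1 <= p ->
  (forall u u' : SU, u != u' -> pnorm p (eU u - eU u') = 2 `^ p^-1) ->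
  (forall w w' : SW, w != w' -> pnorm p (eW w - eW w') = 2 `^ p^-1) ->
  (forall u, measurable (U @^-1` [set u])) ->
  (forall u, measurable (V @^-1` [set u])) ->
  (forall w, measurable (W @^-1` [set w])) ->
  let cU := fun u u' => pnorm p (eU u - eU u') in
  let cW := fun w w' => pnorm p (eW w - eW w') in
  let cUW := pair_cost p cU cW in
  [/\ W1 cUW (jlaw P U W) (plaw P U W)
        = \sum_(w : SW) W1 cU (claw P U W w) (law P U) * law P W w,
      W1 cUW (jlaw P U W) (jlaw P V W)
        = \sum_(w : SW) W1 cU (claw P U W w) (claw P V W w) * law P W w
    & W1 cUW (plaw P U W) (plaw P V W)
        = \sum_(w : SW) W1 cU (law P U) (law P V) * law P W w].
Proof.
move=> p1 hU hW mU mV mW cU cW cUW.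
set k := 2 `^ p^-1.
have p0 : p != 0 by apply: lt0r_neq0; apply: lt_le_trans p1.
have k0 : 0 <= k by exact: powR_ge0.
have cU0 : forall u, cU u u = 0 by move=> u; exact: pnorm0.
have cW0 : forall w, cW w w = 0 by move=> w; exact: pnorm0.
have cUp : forall u u', cU u u' `^ p = (u != u')%:R * 2.
  move=> u u'; have [->|ne] := eqVneq u u'.
    by rewrite cU0 powR0 // mul0r.
  by rewrite /cU hU // -powRrM mulVf // powRr1 // mul1r.
have cWp : forall w w', cW w w' `^ p = (w != w')%:R * 2.
  move=> w w'; have [->|ne] := eqVneq w w'.
    by rewrite cW0 powR0 // mul0r.
  by rewrite /cW hW // -powRrM mulVf // powRr1 // mul1r.
have cUWE : forall x y, cUW x y = ((x.1 != y.1)%:R * 2 + (x.2 != y.2)%:R * 2) `^ p^-1.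
  by move=> x y; rewrite /cUW /pair_cost cUp cWp.
have hc0 : forall x, cUW x x = 0.
  by move=> x; rewrite cUWE !eqxx !mul0r addr0 powR0 // invr_eq0.
have hcge : forall x y, x != y -> k <= cUW x y.
  move=> [a b] [a' b']; rewrite xpair_eqE negb_and cUWE /= => h.
  apply: ge0_ler_powR; rewrite ?nnegrE ?invr_ge0 ?(le_trans _ p1) //.
  by move: h; case: (a != a'); case: (b != b') => //= _;
    rewrite ?mulr1n ?mulr0n ?mul1r ?mul0r ?addr0 ?add0r //; lra.
have hceq : forall x y, x != y -> x.2 = y.2 -> cUW x y = k.
  move=> [a b] [a' b'] /= h e; subst b'.
  rewrite xpair_eqE eqxx andbT in h.
  by rewrite cUWE /= h eqxx /= mul1r mul0r addr0.
have cUk : forall u u', u != u' -> cU u u' = k by move=> u u' /hU.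
have key : forall (mu nu : SU * SW -> R) (muw nuw : SW -> SU -> R),
    (forall x, 0 <= mu x) -> (forall x, 0 <= nu x) ->
    (forall w a, 0 <= muw w a) -> (forall w a, 0 <= nuw w a) ->
    (forall w, \sum_a mu (a, w) = \sum_a nu (a, w)) ->
    (forall w, law P W w != 0 -> \sum_a muw w a = \sum_a nuw w a) ->
    (forall a w, mu (a, w) = muw w a * law P W w) ->
    (forall a w, nu (a, w) = nuw w a * law P W w) ->
    W1 cUW mu nu = \sum_w W1 cU (muw w) (nuw w) * law P W w.
  move=> mu nu muw nuw mu0 nu0 muw0 nuw0 blk blkw hmu hnu.
  rewrite (W1_block _ _ _ (@snd SU SW) cUW k mu nu k0 hc0 hcge hceq mu0 nu0).
    rewrite tvsum_pair mulr_sumr; apply: eq_bigr => w _; apply/esym.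
    apply: W1_term => //; first exact: law_ge0.
    exact: blkw.
  by move=> w; rewrite !sum_snd.
split.
- apply: key.
  + exact: jlaw_ge0.
  + by move=> x; apply: mulr_ge0; exact: law_ge0.
  + exact: claw_ge0.
  + by move=> *; exact: law_ge0.
  + by move=> w; rewrite jlaw_sum1 // /plaw /= -mulr_suml law_sum // mul1r.
  + by move=> w wn; rewrite claw_sum // law_sum.
  + by move=> a w; exact: clawK.
  + by [].
- apply: key.
  + exact: jlaw_ge0.
  + exact: jlaw_ge0.
  + exact: claw_ge0.
  + exact: claw_ge0.
  + by move=> w; rewrite !jlaw_sum1.
  + by move=> w wn; rewrite !claw_sum.
  + by move=> a w; exact: clawK.
  + by move=> a w; exact: clawK.
- apply: key.
  + by move=> x; apply: mulr_ge0; exact: law_ge0.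
  + by move=> x; apply: mulr_ge0; exact: law_ge0.
  + by move=> *; exact: law_ge0.
  + by move=> *; exact: law_ge0.
  + by move=> w; rewrite /plaw /= -!mulr_suml !law_sum.
  + by move=> w wn; rewrite !law_sum.
  + by [].
  + by [].
Qed.
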